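(* Let $L\ge 2$, let $\Omega\subsetneq\mathbb{Z}_L$ with $|\Omega|=n$, and let $K\ge 2$. Let $\mathfrak{C}=\{\mathcal{C}^0,\dots,\mathcal{C}^{K-1}\}$, where each $\mathcal{C}^i=\{C^i_0,\dots,C^i_{M-1}\}$ is a set of $M$ complex sequences of length $L$, every sequence $C^i_j$ satisfying the spectral constraint: its frequency-domain dual $(\hat c^i_{j,0},\dots,\hat c^i_{j,L-1})$ satisfies $|\hat c^i_{j,k}|^2=\frac{L}{L-n}$ for $k\notin\Omega$ and $\hat c^i_{j,k}=0$ for $k\in\Omega$. Define $\theta_c(\mathfrak{C})=\max\{|\theta_{C^i_l,C^j_m}(\tau)|:0\le i\neq j<K,\ 0\le l,m<M,\ 0\le \tau<L\}$. Then $$\theta_c(\mathfrak{C})\ge\frac{L}{\sqrt{L-n}}.$$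
   Context: $\omega_L=e^{2\pi\sqrt{-1}/L}$. For a length-$L$ sequence $C=(c_0,\dots,c_{L-1})$ its frequency-domain dual is $\widehat C=(\hat c_0,\dots,\hat c_{L-1})$ with $\hat c_k=\frac{1}{\sqrt L}\sum_{t=0}^{L-1}c_t\omega_L^{-tk}$. The periodic cross-correlation of length-$L$ sequences $C,D$ is $\theta_{C,D}(\tau)=\sum_{t=0}^{L-1}c_t d^*_{\langle t+\tau\rangle_L}$, where $\langle\cdot\rangle_L$ is reduction mod $L$. *)

(* Defs.v *)
From HB Require Import structures.
From mathcomp Require Import all_boot all_order all_algebra.
From mathcomp Require Import reals trigo.
From mathcomp Require Export complex.
Set Implicit Arguments. Unset Strict Implicit. Unset Printing Implicit Defensive.
Import Order.TTheory GRing.Theory Num.Theory.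
Local Open Scope ring_scope.
Local Open Scope complex_scope.

Definition omega (R : realType) (L : nat) : R[i] :=
  (cos (2 * pi / L%:R)) +i* (sin (2 * pi / L%:R)).

Definition cmod (R : realType) (z : R[i]) : R :=
  Num.sqrt (complex.Re z ^+ 2 + complex.Im z ^+ 2).

Definition cseq (R : realType) (L : nat) := 'I_L -> R[i].

Definition dft (R : realType) (L : nat) (c : cseq R L) (k : 'I_L) : R[i] :=
  ((Num.sqrt (L%:R : R))^-1)%:C *
  \sum_(t < L) c t * (omega R L ^+ (t * k))^-1.

(* <t + tau>_L as an element of 'I_L (L > 0 since 'I_L is inhabited by t) *)
Definition addmod (L : nat) (t : 'I_L) (tau : nat) : 'I_L :=
  Ordinal (ltn_pmod (t + tau) (leq_ltn_trans (leq0n t) (ltn_ord t))).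

Definition pcorr (R : realType) (L : nat) (c d : cseq R L) (tau : nat) : R[i] :=
  \sum_(t < L) c t * Num.conj (d (addmod t tau)).

Definition spectral_constraint (R : realType) (L n : nat) (Om : {set 'I_L})
    (c : cseq R L) : Prop :=
  forall k : 'I_L,
    (k \notin Om -> cmod (dft c k) ^+ 2 = (L%:R / (L - n)%:R : R)) /\
    (k \in Om -> dft c k = 0).

(* theta_c of a family of K sets of M sequences:
   max { |theta_{C^i_l, C^j_m}(tau)| : i <> j, l, m < M, tau < L }
   (all values are >= 0, so taking the max with initial value 0 is harmless
    when the index set is nonempty). *)
Definition thetac (R : realType) (L K M : nat) (C : 'I_K -> 'I_M -> cseq R L) : R :=
  \big[Num.max/0]_(i < K) \big[Num.max/0]_(j < K | i != j)
   \big[Num.max/0]_(l < M) \big[Num.max/0]_(m < M) \big[Num.max/0]_(tau < L)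
     cmod (pcorr (C i l) (C j m) tau).

(* Main.v *)
Require Import Defs.
From HB Require Import structures.
From mathcomp Require Import all_boot all_order all_algebra.
From mathcomp Require Import reals trigo complex.
From mathcomp Require Import ring lra.
Import Order.TTheory GRing.Theory Num.Theory.
Local Open Scope ring_scope.

Section Roots.
Variable R : realType.
Local Notation e a := ((cos a +i* sin a)%C : R[i]).

Lemma e_mul (a b : R) : e a * e b = e (a + b).
Proof.
rewrite cosD sinD; apply/eqP; rewrite eq_complex /=; apply/andP; split; apply/eqP.
  by [].
by rewrite addrC [sin a * _]mulrC.
Qed.

Lemma e_exp (a : R) (m : nat) : e a ^+ m = e (a *+ m).
Proof.
elim: m => [|m IH]; first by rewrite expr0 mulr0n cos0 sin0.
by rewrite exprS IH e_mul mulrS.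
Qed.

Variable L : nat.
Hypothesis L0 : (0 < L)%N.
Local Notation w := (omega R L).

Lemma wE : w = e (2 * pi / L%:R). Proof. by []. Qed.

Lemma LR0 : (L%:R : R) != 0. Proof. by rewrite pnatr_eq0 -lt0n. Qed.

Lemma wL : w ^+ L = 1.
Proof.
rewrite wE e_exp.
have -> : 2 * pi / L%:R *+ L = (pi : R) *+ 2.
  by rewrite -mulr_natr divfK ?LR0 // mulr_natl.
by rewrite cos2pi sin2pi.
Qed.

Lemma wm_neq1 (m : nat) : (0 < m)%N -> (m < L)%N -> w ^+ m != 1.
Proof.
move=> m0 mL; rewrite wE e_exp; apply/negP => /eqP [] hc _.
set y : R := pi * m%:R / L%:R.
have hy : 2 * (pi : R) / L%:R *+ m = y *+ 2.
  rewrite /y -(mulr_natr _ m) -(mulr_natr _ 2); ring.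
rewrite hy cos_mulr2n in hc.
have hc2 : sin y ^+ 2 = 0.
  rewrite sin2cos2; move: hc; rewrite mulr2n; lra.
have : 0 < sin y.
  apply: sin_gt0_pi; have hL : (0 : R) < L%:R by rewrite ltr0n.
  have hm : (0 : R) < m%:R by rewrite ltr0n.
  have hmL : (m%:R : R) < L%:R by rewrite ltr_nat.
  have hp := pi_gt0 R.
  apply/andP; split.
    by rewrite /y divr_gt0 // mulr_gt0.
  rewrite /y ltr_pdivrMr //; rewrite ltr_pM2l //.
by move: hc2 => /eqP; rewrite sqrf_eq0 => /eqP ->; rewrite ltxx.
Qed.

Lemma w_conj : w * Num.conj w = 1.
Proof.
rewrite wE /=; apply/eqP; rewrite eq_complex /=; apply/andP; split; apply/eqP.
  have h := cos2Dsin2 (2 * pi / L%:R : R); rewrite !expr2 in h; by rewrite mulrN opprK.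
ring.
Qed.

Lemma wmod a : w ^+ (a %% L) = w ^+ a.
Proof. by rewrite {2}(divn_eq a L) exprD mulnC exprM wL expr1n mul1r. Qed.

Lemma wJ j : w ^+ j * (w ^+ j)^* = 1.
Proof. by rewrite rmorphXn -exprMn w_conj expr1n. Qed.

Lemma wV j : (w ^+ j)^-1 = (w ^+ j)^*.
Proof. exact/mulr1_eq/wJ. Qed.

Lemma geo (z : R[i]) : z ^+ L = 1 -> z != 1 -> \sum_(i < L) z ^+ i = 0.
Proof.
move=> h1 h2; have := subrX1 z L; rewrite h1 subrr => /esym /eqP.
by rewrite mulf_eq0 subr_eq0 (negPf h2) /= => /eqP.
Qed.

Lemma orth (a b : 'I_L) :
  \sum_(k < L) w ^+ (a * k) * (w ^+ (b * k))^* = (a == b)%:R * L%:R.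
Proof.
have E : forall k : 'I_L, w ^+ (a * k) * (w ^+ (b * k))^* = (w ^+ a * (w ^+ b)^*) ^+ k.
  by move=> k; rewrite !exprM exprMn rmorphXn.
rewrite (eq_bigr _ (fun k _ => E k)).
case: (eqVneq a b) => [<-|nab].
  rewrite wJ; under eq_bigr do rewrite expr1n.
  by rewrite sumr_const card_ord mul1r.
rewrite mul0r; apply: geo.
  rewrite exprMn -rmorphXn -!exprM [(a * L)%N]mulnC [(b * L)%N]mulnC !exprM wL.
  by rewrite !expr1n rmorph1 mulr1.
case: (ltngtP a b) => hab; last by move/val_inj: hab nab => ->; rewrite eqxx.
  have -> : w ^+ a * (w ^+ b)^* = (w ^+ (b - a))^*.
    by rewrite -(subnKC (ltnW hab)) exprD rmorphM mulrA wJ mul1r addKn.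
  apply/negP => /eqP h1.
  have := wm_neq1 (b - a); rewrite subn_gt0 hab.
  have -> : (b - a < L)%N by apply: leq_ltn_trans (leq_subr _ _) (ltn_ord b).
  by rewrite -[w ^+ (b - a)]mulr1 -{1}h1 wJ eqxx => /(_ isT isT).
have -> : w ^+ a * (w ^+ b)^* = w ^+ (a - b).
  by rewrite -(subnKC (ltnW hab)) exprD mulrAC wJ mul1r addKn.
apply: wm_neq1; first by rewrite subn_gt0.
by apply: leq_ltn_trans (leq_subr _ _) (ltn_ord a).
Qed.

Definition F (x : 'I_L -> R[i]) (k : 'I_L) := \sum_(t < L) x t * w ^+ (t * k).

Lemma parseval (x : 'I_L -> R[i]) :
  \sum_(k < L) F x k * (F x k)^* = L%:R * \sum_(t < L) x t * (x t)^*.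
Proof.
transitivity (\sum_(k < L) \sum_(t < L) \sum_(s < L)
   (x t * (x s)^*) * (w ^+ (t * k) * (w ^+ (s * k))^*)).
  apply: eq_bigr => k _; rewrite /F rmorph_sum mulr_suml; apply: eq_bigr => t _.
  rewrite mulr_sumr; apply: eq_bigr => s _; by rewrite rmorphM mulrACA.
rewrite exchange_big /= mulr_sumr; apply: eq_bigr => t _.
rewrite exchange_big /=.
rewrite (eq_bigr (fun s => x t * (x s)^* * ((t == s)%:R * L%:R))); last first.
  by move=> s _; rewrite -mulr_sumr orth.
rewrite (bigD1 t) //= eqxx big1 ?addr0; first by rewrite mul1r mulrC.
by move=> s /negPf ns; rewrite eq_sym ns mul0r mulr0.
Qed.

Lemma addmod_inj (t : 'I_L) : injective (fun tau : 'I_L => addmod t tau).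
Proof.
move=> x y /(congr1 val) /= /eqP; rewrite eqn_modDl !modn_small ?ltn_ord //.
by move=> /eqP /val_inj.
Qed.

Lemma Fcorr (c d : cseq R L) (k : 'I_L) :
  F (fun tau : 'I_L => pcorr c d tau) k =
  (\sum_(t < L) c t * (w ^+ (t * k))^*) * (\sum_(t < L) d t * (w ^+ (t * k))^*)^*.
Proof.
rewrite /F /pcorr.
transitivity (\sum_(t < L) c t * ((w ^+ (t * k))^* * \sum_(u < L) (d u)^* * w ^+ (u * k))).
  under eq_bigr do rewrite mulr_suml. rewrite exchange_big /=.
  apply: eq_bigr => t _.
  rewrite 2![in RHS]mulr_sumr [in RHS](reindex_inj (addmod_inj t)) /=.
  apply: eq_bigr => tau _.
  have hw : w ^+ (addmod t tau * k) = w ^+ (t * k) * w ^+ (tau * k).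
    by rewrite exprM /= wmod -exprM mulnDl exprD.
  rewrite hw -[LHS]mulr1 -(wJ (t * k)); ring.
rewrite rmorph_sum mulr_suml; apply: eq_bigr => t _.
rewrite mulrA; congr (_ * _); apply: eq_bigr => u _.
by rewrite rmorphM /= conjCK.
Qed.

End Roots.

Lemma le_bigmax_seq (R : realDomainType) (T : eqType) (s : seq T) (P : pred T)
   (F : T -> R) (i0 : T) :
  i0 \in s -> P i0 -> F i0 <= \big[Num.max/0]_(i <- s | P i) F i.
Proof.
elim: s => // a s IH; rewrite in_cons big_cons => /orP [/eqP ->|hin] hp.
  by rewrite hp le_max lexx.
by case: (P a); rewrite ?le_max (IH hin hp) ?orbT.
Qed.

Lemma le_bigmax_r (R : realDomainType) (I : finType) (P : pred I) (F : I -> R) (i0 : I) :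
  P i0 -> F i0 <= \big[Num.max/0]_(i | P i) F i.
Proof. by move=> hp; apply: le_bigmax_seq => //; rewrite mem_index_enum. Qed.

Lemma cmod_ge0 (R : realType) (z : R[i]) : 0 <= cmod z.
Proof. exact: sqrtr_ge0. Qed.

Lemma cmodC (R : realType) (z : R[i]) : ((cmod z) ^+ 2)%:C%C = z * z^*.
Proof. by rewrite -normCK normc_def rmorphXn. Qed.

Lemma cmod0 (R : realType) : cmod (0 : R[i]) = 0.
Proof. by rewrite /cmod /= expr0n addr0 sqrtr0. Qed.

Lemma conjR (R : realType) (x : R) : (x%:C%C : R[i])^* = x%:C%C.
Proof. exact: conjc_real. Qed.

Lemma hA (R : realType) (L : nat) (L0 : (0 < L)%N) (x : cseq R L) (k : 'I_L) :
  (\sum_(t < L) x t * (omega R L ^+ (t * k))^*) *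
  (\sum_(t < L) x t * (omega R L ^+ (t * k))^*)^* =
  L%:R * ((cmod (dft x k)) ^+ 2)%:C%C.
Proof.
rewrite cmodC /dft.
under [in RHS]eq_bigr do rewrite wV //.
set S := \sum_(t < L) _.
set s := (Num.sqrt (L%:R : R))^-1.
have hs2 : (L%:R : R[i]) * (s%:C%C * s%:C%C) = 1.
  rewrite -rmorphM -[L%:R](rmorph_nat (real_complex R)) -rmorphM.
  rewrite -expr2 exprVn sqr_sqrtr ?ler0n // mulfV ?LR0 //.
rewrite rmorphM /= conjR.
transitivity ((L%:R * (s%:C%C * s%:C%C)) * (S * S^*)); last by ring.
by rewrite hs2 mul1r.
Qed.

Theorem theorem2 (R : realType) (L n K M : nat) (Om : {set 'I_L})
  (C : 'I_K -> 'I_M -> cseq R L) :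
  (2 <= L)%N -> Om \proper [set: 'I_L] -> #|Om| = n ->
  (2 <= K)%N -> (0 < M)%N ->
  (forall (i : 'I_K) (j : 'I_M), spectral_constraint n Om (C i j)) ->
  thetac C >= L%:R / Num.sqrt ((L - n)%:R).
Proof.
move=> L2 prop cardO K2 M0 H.
have L0 : (0 < L)%N by apply: leq_trans L2.
have nL : (n < L)%N.
  by rewrite -cardO; have := proper_card prop; rewrite cardsT card_ord.
have LnR : ((L - n)%:R : R) != 0 by rewrite pnatr_eq0 -lt0n subn_gt0.
have LRR : (L%:R : R) != 0 by rewrite pnatr_eq0 -lt0n.
pose i0 : 'I_K := Ordinal (ltnW K2).
pose j0 : 'I_K := Ordinal K2.
pose l0 : 'I_M := Ordinal M0.
pose c := C i0 l0; pose d := C j0 l0.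
pose th := fun tau : 'I_L => pcorr c d tau.
have hs : forall (x : cseq R L) k, spectral_constraint n Om x ->
    (cmod (dft x k)) ^+ 2 = if k \in Om then 0 else L%:R / (L - n)%:R.
  move=> x k /(_ k) [h1 h2]; case: ifP => hk.
    by rewrite h2 // cmod0 expr0n.
  by rewrite h1 // hk.
have hS : \sum_(tau < L) cmod (th tau) ^+ 2 = L%:R ^+ 3 / (L - n)%:R.
  apply: complexI; rewrite rmorph_sum.
  rewrite (eq_bigr _ (fun tau _ => @cmodC R (th tau))).
  have LC : (L%:R : R[i]) != 0 by rewrite pnatr_eq0 -lt0n.
  apply: (mulfI LC); rewrite -parseval //.
  under eq_bigr do rewrite Fcorr //.
  set a : R := L%:R / (L - n)%:R.
  transitivity (\sum_(k < L) ((L%:R ^+ 2 * (if k \in ~: Om then a * a else 0)) : R)%:C%C).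
    apply: eq_bigr => k _.
    rewrite rmorphM /= conjCK mulrACA [X in _ * X]mulrC !hA // (hs c k (H _ _)) (hs d k (H _ _)).
    rewrite inE; case: (k \in Om) => /=.
      by rewrite !rmorph0 !mulr0.
    rewrite -[L%:R](rmorph_nat (real_complex R)) -!rmorphM; congr (_%:C%C); rewrite /a; ring.
  rewrite -rmorph_sum -mulr_sumr -big_mkcond /= sumr_const.
  have -> : #|~: Om| = (L - n)%N by have := cardsC Om; rewrite card_ord cardO => h; apply/eqP; rewrite -(eqn_add2l n) h subnKC // ltnW.
  rewrite -[(L%:R : R[i])](rmorph_nat (real_complex R)) -rmorphM; congr (_%:C%C).
  by rewrite /a -mulr_natr; field.
set mx := \big[Num.max/0]_(tau < L) cmod (pcorr c d tau).
have hle : forall tau : 'I_L, cmod (th tau) <= mx.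
  by move=> tau; apply: (@le_bigmax_r R _ xpredT).
have mx0 : 0 <= mx by apply: le_trans (cmod_ge0 _ _) (hle (Ordinal L0)).
have hSle : \sum_(tau < L) cmod (th tau) ^+ 2 <= mx ^+ 2 * L%:R.
  apply: (@le_trans _ _ (\sum_(tau < L) mx ^+ 2)).
    apply: ler_sum => tau _; rewrite !expr2.
    by apply: ler_pM; rewrite ?cmod_ge0 ?hle.
  by rewrite sumr_const card_ord mulr_natr.
have key : L%:R ^+ 2 / (L - n)%:R <= mx ^+ 2.
  have -> : (L%:R ^+ 2 / (L - n)%:R : R) = L%:R ^+ 3 / (L - n)%:R / L%:R.
    by field; rewrite LRR.
  by rewrite ler_pdivrMr ?ltr0n // -hS.
have main : L%:R / Num.sqrt ((L - n)%:R) <= mx.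
  rewrite -(ler_pXn2r (isT : (0 < 2)%N)) ?nnegrE //; last first.
    by rewrite divr_ge0 ?ler0n ?sqrtr_ge0.
  by rewrite expr_div_n sqr_sqrtr ?ler0n.
rewrite /thetac.
apply: (le_trans _ (@le_bigmax_r _ _ _ _ i0 _)) => //=.
apply: (le_trans _ (@le_bigmax_r _ _ _ _ j0 _)) => //=.
apply: (le_trans _ (@le_bigmax_r _ _ _ _ l0 _)) => //=.
by apply: (le_trans _ (@le_bigmax_r _ _ _ _ l0 _)).
Qed.
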